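(* Let $\mathcal{A}$ be a complex Banach algebra with unity and $a,x\in\mathcal{A}$. The following are equivalent: (1) $a$ is g$\pi$-Hirano invertible and its g$\pi$-Hirano inverse is $x$; (2) $xax=x$, $xa=ax$ and $a^{n}-ax\in\mathcal{A}^{qnil}$ for some positive integer $n$; (3) $xax=x$, $xa=ax$ and $a^{n}-a^{m}x\in\mathcal{A}^{qnil}$ for some positive integers $m,n$ with $m-n\neq1$.
   Context: $\mathcal{A}^{qnil}$ denotes the set of quasinilpotent elements of $\mathcal{A}$ (spectrum equal to $\{0\}$). An element $x\in\mathcal{A}$ is a g$\pi$-Hirano inverse of $a$ if $xax=x$, $ax=xa$ and $a-a^{n+2}x\in\mathcal{A}^{qnil}$ for some positive integer $n$; such $x$ is unique when it exists. *)

(* Defs.v *)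
From HB Require Import structures.
From mathcomp Require Import all_boot all_order all_algebra.
From mathcomp Require Import complex.
From mathcomp Require Import all_classical all_reals.
Set Implicit Arguments. Unset Strict Implicit. Unset Printing Implicit Defensive.
Import Order.TTheory GRing.Theory Num.Theory.
Local Open Scope ring_scope.
Local Open Scope classical_set_scope.

Section Defs.
Variable (R : realType).
Local Notation C := (R[i])%C.

Record banach_algebra_norm (A : algType C) (N : A -> R) : Prop := {
  bnorm_ge0 : forall x, 0 <= N x ;
  bnorm_eq0 : forall x, N x = 0 -> x = 0 ;
  bnorm_triangle : forall x y, N (x + y) <= N x + N y ;
  bnorm_scale : forall (c : C) x, N (c *: x) = Normc.normc c * N x ;
  bnorm_mul : forall x y, N (x * y) <= N x * N y ;
  bnorm_one : N 1 = 1 ;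
  bnorm_complete : forall u : nat -> A,
      (forall e : R, 0 < e -> exists k, forall p q, (k <= p)%N -> (k <= q)%N ->
          N (u p - u q) < e) ->
      exists l : A, forall e : R, 0 < e -> exists k, forall p, (k <= p)%N ->
          N (u p - l) < e
}.

Variable (A : algType C).

Definition invertible (a : A) : Prop := exists b : A, a * b = 1 /\ b * a = 1.

Definition spectrum (a : A) : set C := [set l | ~ invertible (l%:A - a)].

Definition qnil (a : A) : Prop := spectrum a = [set 0].

Definition gpiHirano_inverse (a x : A) : Prop :=
  [/\ x * a * x = x, a * x = x * a &
      exists n : nat, (0 < n)%N /\ qnil (a - a ^+ (n + 2) * x)].

Definition gpiHirano_invertible (a : A) : Prop :=
  exists x, gpiHirano_inverse a x.
End Defs.

(* Main.v *)
Require Import Defs.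
From HB Require Import structures.
From mathcomp Require Import all_boot all_order all_algebra.
From mathcomp Require Import complex.
From mathcomp Require Import all_classical all_reals.
From Stdlib Require Import Classical.
From mathcomp Require Import zify.
Import Order.TTheory GRing.Theory Num.Theory.
Set Implicit Arguments. Unset Strict Implicit.
Local Open Scope ring_scope.

Section InvS.
Variable (B : pzRingType).
Definition Inv (c y : B) := (exists w, y * w * c = c) /\ (exists w, c * w * y = c).

Lemma Inv_split c y1 y2 : y1 * y2 = y2 * y1 -> Inv c (y1 * y2) -> Inv c y1 /\ Inv c y2.
Proof.
move=> hc [[w hw] [w' hw']]; split; split.
- by exists (y2 * w); rewrite mulrA.
- exists (w' * y2).
  have -> : c * (w' * y2) * y1 = c * w' * (y2 * y1) by rewrite !mulrA.
  by rewrite -hc.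
- exists (y1 * w).
  have -> : y2 * (y1 * w) * c = (y2 * y1) * w * c by rewrite !mulrA.
  by rewrite -hc.
- exists (w' * y1).
  have -> : c * (w' * y1) * y2 = c * w' * (y1 * y2) by rewrite !mulrA.
  by [].
Qed.

Lemma Inv_mul c y1 y2 : c * c = c -> y1 * c = c * y1 -> y2 * c = c * y2 ->
  Inv c y1 -> Inv c y2 -> Inv c (y1 * y2).
Proof.
move=> cc h1 h2 [[w1 hw1] [v1 hv1]] [[w2 hw2] [v2 hv2]]; split.
- exists (w2 * c * w1).
  have -> : y1 * y2 * (w2 * c * w1) * c = y1 * (y2 * w2 * c) * w1 * c by rewrite !mulrA.
  rewrite hw2 h1.
  have -> : c * y1 * w1 * c = c * (y1 * w1 * c) by rewrite !mulrA.
  by rewrite hw1 cc.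
- exists (v2 * c * v1).
  have -> : c * (v2 * c * v1) * (y1 * y2) = c * v2 * (c * v1 * y1) * y2 by rewrite !mulrA.
  rewrite hv1 -mulrA -h2 mulrA. 
  by rewrite hv2 cc.
Qed.

Lemma Inv_congr c y y' : c * c = c -> y * c = c * y -> y' * c = c * y' -> y * c = y' * c ->
  Inv c y -> Inv c y'.
Proof.
move=> cc h h' e [[w hw] [v hv]]; split.
- exists (c * w * c).
  have -> : y' * (c * w * c) * c = (y' * c) * w * (c * c) by rewrite !mulrA.
  by rewrite cc -e h -!mulrA (mulrA y) hw cc.
- exists (c * v * c).
  have -> : c * (c * v * c) * y' = (c * c) * v * (c * y') by rewrite !mulrA.
  by rewrite cc -h' -e mulrA hv cc.
Qed.

Lemma Inv_one c : c * c = c -> Inv c 1.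
Proof. by move=> cc; split; exists 1; rewrite !mulr1 ?mul1r. Qed.

Lemma inv_corner e (y : B) : e * e = e -> y * e = e * y ->
  (exists z, y * z = 1 /\ z * y = 1) <-> Inv e y /\ Inv (1 - e) y.
Proof.
move=> ee ye; split.
- by move=> [z [h1 h2]]; split; split; exists z; rewrite ?h1 ?mul1r -?mulrA ?h2 ?mulr1.
move=> [[[w1 hw1] [v1 hv1]] [[w2 hw2] [v2 hv2]]].
set p := 1 - e in hw2 hv2 *.
have ep : e + p = 1 by rewrite /p addrC subrK.
have r : y * (w1 * e + w2 * p) = 1 by rewrite mulrDr !mulrA hw1 hw2 ep.
have l : (e * v1 + p * v2) * y = 1 by rewrite mulrDl hv1 hv2 ep.
exists (w1 * e + w2 * p); split => //.
have -> : w1 * e + w2 * p = e * v1 + p * v2.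
  by rewrite -[LHS]mul1r -l -mulrA r mulr1.
exact: l.
Qed.
End InvS.

Section Main.
Variable (R : realType) (A : algType (R[i])%C) (a x : A).
Hypotheses (hxax : x * a * x = x) (hax : a * x = x * a).

Definition ev (P : {poly (R[i])%C}) : A := horner_alg a P.

Lemma comm_ev y P : y * a = a * y -> y * ev P = ev P * y.
Proof.
move=> h; elim/poly_ind: P => [|P c IH]; first by rewrite /ev rmorph0 mulr0 mul0r.
rewrite /ev rmorphD rmorphM /= horner_algX horner_algC -/(ev P).
rewrite mulrDr mulrDl mulrA IH -!mulrA h mulrA (comm_alg c y).
by [].
Qed.

Lemma ev_comm P Q : ev P * ev Q = ev Q * ev P.
Proof. by rewrite /ev -!rmorphM mulrC. Qed.

Lemma evM P Q : ev (P * Q) = ev P * ev Q.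
Proof. by rewrite /ev rmorphM. Qed.

Lemma ev_XsubC z : ev ('X - z%:P) = a - z%:A.
Proof. by rewrite /ev rmorphB /= horner_algX horner_algC. Qed.

Lemma Inv_ev c P : c * c = c -> c * a = a * c -> P != 0 ->
  Inv c (ev P) <-> (forall z, root P z -> Inv c (a - z%:A)).
Proof.
move=> cc ca nz; split.
  move=> h z /factor_theorem [Q hQ].
  have := @Inv_split _ c (ev Q) (ev ('X - z%:P)) (ev_comm _ _).
  rewrite -ev_XsubC /ev -rmorphM -hQ => /(_ h) [].
  by [].
move=> H.
have [r hr] := closed_field_poly_normal P.
have hl : lead_coef P != 0 by rewrite lead_coef_eq0.
have roots : forall z, z \in r -> Inv c (a - z%:A).
  by move=> z zr; apply: H; rewrite hr rootZ // root_prod_XsubC.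
have -> : ev P = (lead_coef P)%:A * ev (\prod_(z <- r) ('X - z%:P)).
  by rewrite {1}hr -mul_polyC /ev rmorphM /= horner_algC.
apply: Inv_mul => //.
- by rewrite (comm_alg _ c).
- by rewrite (comm_ev _ ca).
- split.
    exists (lead_coef P)^-1%:A.
    by rewrite mulr_algl scalerA mulfV // scale1r mul1r.
  exists (lead_coef P)^-1%:A.
  by rewrite -mulrA mulr_algl scalerA mulVf // scale1r mulr1.
elim: r roots {hr} => [|z r IH] roots.
  by rewrite big_nil /ev rmorph1; apply: Inv_one.
rewrite big_cons evM ev_XsubC.
apply: Inv_mul => //.
- by rewrite mulrBl mulrBr ca (comm_alg _ c).
- by rewrite (comm_ev _ ca).
- by apply: roots; rewrite inE eqxx.
by apply: IH => w wr; apply: roots; rewrite inE wr orbT.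
Qed.

Let e := a * x.
Let p := 1 - e.

Lemma ee : e * e = e.
Proof. by rewrite /e -mulrA (mulrA x) hxax. Qed.
Lemma pp : p * p = p.
Proof. by rewrite /p mulrBl mul1r mulrBr mulr1 ee subrr subr0. Qed.
Lemma ep0 : e * p = 0.
Proof. by rewrite /p mulrBr mulr1 ee subrr. Qed.
Lemma ea : e * a = a * e.
Proof. by rewrite /e -mulrA -hax mulrA. Qed.
Lemma ex : e * x = x * e.
Proof. by rewrite /e mulrA hax. Qed.
Lemma pa : p * a = a * p.
Proof. by rewrite /p mulrBl mulrBr mul1r mulr1 ea. Qed.

Lemma akx k c : a ^+ k.+1 * x * c = a ^+ k * (e * c).
Proof. by rewrite exprSr /e !mulrA. Qed.

Definition Te z := Inv e (a - z%:A).
Definition Tp z := Inv p (a - z%:A).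

Lemma Te0 : Te 0.
Proof.
rewrite /Te scale0r subr0. split. all: exists x.
  by rewrite -/e ee.
by rewrite -mulrA -hax -/e ee.
Qed.

Lemma qnil_iff b : @qnil R A b <-> (forall l, l != 0 -> @invertible R A (l%:A - b)) /\ ~ @invertible R A (0%:A - b).
Proof.
rewrite /qnil /spectrum; split.
  move=> H.
  have K l : (~ @invertible R A (l%:A - b)) = (l = 0) by exact: (congr1 (fun S => S l) H).
  split.
    move=> l nz; apply: NNPP => ni; move: ni; rewrite K => l0.
    by move: nz; rewrite l0 eqxx.
  by rewrite K.
move=> [h1 h2]; apply: funext => l; apply: propext; split => /=.
  by move=> ni; case: (eqVneq l 0) => // nz; case: ni; apply: h1.
by move=> ->.
Qed.

Lemma root_lsub l (Q : {poly (R[i])%C}) z : root (l%:P - Q) z = (Q.[z] == l).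
Proof. by rewrite /root !hornerE subr_eq0 eq_sym. Qed.

Lemma lsub_neq0 l (Q : {poly (R[i])%C}) : (1 < size Q)%N -> l%:P - Q != 0.
Proof.
move=> hs; apply/eqP => /subr0_eq h; move: hs; rewrite -h.
by have := size_polyC_leq1 l; case: (size _) => [|[|]].
Qed.

Lemma inv_l b Qe Qp l : b * e = e * b -> b * e = ev Qe * e -> b * p = ev Qp * p ->
  (1 < size Qe)%N -> (1 < size Qp)%N ->
  @invertible R A (l%:A - b) <-> (forall z, Qe.[z] = l -> Te z) /\ (forall z, Qp.[z] = l -> Tp z).
Proof.
move=> hb he hp se sp.
have ye : (l%:A - b) * e = e * (l%:A - b) by rewrite mulrBl mulrBr hb (comm_alg l e).
rewrite /invertible (inv_corner ee ye) -/p.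
have yp : (l%:A - b) * p = p * (l%:A - b).
  by rewrite /p mulrBr mulr1 [(1 - e) * _]mulrBl mul1r ye.
have Ce : Inv e (l%:A - b) <-> Inv e (ev (l%:P - Qe)).
  have h1 : ev (l%:P - Qe) * e = e * ev (l%:P - Qe) by rewrite (comm_ev _ ea).
  have h2 : (l%:A - b) * e = ev (l%:P - Qe) * e.
    by rewrite mulrBl he /ev rmorphB /= horner_algC mulrBl.
  by split; apply: Inv_congr => //; apply: ee.
have Cp : Inv p (l%:A - b) <-> Inv p (ev (l%:P - Qp)).
  have h1 : ev (l%:P - Qp) * p = p * ev (l%:P - Qp) by rewrite (comm_ev _ pa).
  have h2 : (l%:A - b) * p = ev (l%:P - Qp) * p.
    by rewrite mulrBl hp /ev rmorphB /= horner_algC mulrBl.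
  by split; apply: Inv_congr => //; apply: pp.
rewrite Ce Cp (Inv_ev ee ea (lsub_neq0 _ se)) (Inv_ev pp pa (lsub_neq0 _ sp)).
split; move=> [H1 H2]; split => z hz.
- by apply: H1; rewrite root_lsub hz.
- by apply: H2; rewrite root_lsub hz.
- by apply: H1; move: hz; rewrite root_lsub => /eqP.
- by apply: H2; move: hz; rewrite root_lsub => /eqP.
Qed.

Lemma qnil_char b Qe Qp : b * e = e * b -> b * e = ev Qe * e -> b * p = ev Qp * p ->
  (1 < size Qe)%N -> (1 < size Qp)%N ->
  @qnil R A b <-> [/\ forall z, ~ Te z -> Qe.[z] = 0, forall z, ~ Tp z -> Qp.[z] = 0 &
                 exists z, ~ Te z \/ ~ Tp z].
Proof.
move=> hb he hp se sp.
have I l := inv_l l hb he hp se sp.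
rewrite qnil_iff; split.
  move=> [H1 H0]; split.
  - move=> z nt; case: (eqVneq Qe.[z] 0) => // nz; case: nt.
    by have [h _] := (I _).1 (H1 _ nz); apply: h.
  - move=> z nt; case: (eqVneq Qp.[z] 0) => // nz; case: nt.
    by have [_ h] := (I _).1 (H1 _ nz); apply: h.
  apply: NNPP => nex; apply: H0; apply/(I 0); split => z _; apply: NNPP => nt;
    apply: nex; exists z; by [left | right].
move=> [Ve Vp [z0 hz0]]; split.
  move=> l nz; apply/(I l); split => z hz; apply: NNPP => nt; move: nz.
    by rewrite -hz (Ve _ nt) eqxx.
  by rewrite -hz (Vp _ nt) eqxx.
move=> /(I 0) [H1 H2]; case: hz0 => nt; apply: (nt).
  by apply: H1; apply: Ve.
by apply: H2; apply: Vp.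
Qed.

Lemma ev_Xn k : ev ('X ^+ k) = a ^+ k.
Proof. by rewrite /ev rmorphXn /= horner_algX. Qed.
Lemma ev_X : ev 'X = a.
Proof. by rewrite /ev horner_algX. Qed.

Lemma ae : GRing.comm a e. Proof. exact: esym ea. Qed.
Lemma xe : GRing.comm x e. Proof. exact: esym ex. Qed.

Lemma c1 n : (0 < n)%N -> @qnil R A (a - a ^+ (n + 2) * x) <->
  [/\ forall z, ~ Te z -> ('X - 'X ^+ n.+1).[z] = 0, forall z, ~ Tp z -> ('X : {poly (R[i])%C}).[z] = 0 &
      exists z, ~ Te z \/ ~ Tp z].
Proof.
move=> hn; rewrite addn2; apply: qnil_char.
- apply: commr_sym; exact: (commrB ea (commrM (commrX _ ea) ex)).
- by rewrite mulrBl akx ee /ev rmorphB /= horner_algX rmorphXn /= horner_algX mulrBl.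
- by rewrite mulrBl akx ep0 mulr0 subr0 ev_X.
- rewrite -opprB size_opp size_polyDl size_polyXn // size_opp size_polyX.
  by case: n hn.
- by rewrite size_polyX.
Qed.

Lemma c2 k : (0 < k)%N -> @qnil R A (a ^+ k - a * x) <->
  [/\ forall z, ~ Te z -> ('X ^+ k - 1).[z] = 0, forall z, ~ Tp z -> ('X ^+ k : {poly (R[i])%C}).[z] = 0 &
      exists z, ~ Te z \/ ~ Tp z].
Proof.
move=> hk; apply: qnil_char.
- apply: commr_sym; exact: (commrB (commrX _ ea) (commrM ea ex)).
- by rewrite mulrBl -/e ee /ev rmorphB /= rmorphXn /= horner_algX rmorph1 mulrBl mul1r.
- by rewrite mulrBl -/e ep0 subr0 ev_Xn.
- by rewrite -polyC1 size_XnsubC.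
- by rewrite size_polyXn; case: k hk.
Qed.

Lemma c3 j n : (0 < n)%N -> n != j -> @qnil R A (a ^+ n - a ^+ j.+1 * x) <->
  [/\ forall z, ~ Te z -> ('X ^+ n - 'X ^+ j).[z] = 0, forall z, ~ Tp z -> ('X ^+ n : {poly (R[i])%C}).[z] = 0 &
      exists z, ~ Te z \/ ~ Tp z].
Proof.
move=> hn nj; apply: qnil_char.
- apply: commr_sym; exact: (commrB (commrX _ ea) (commrM (commrX _ ea) ex)).
- by rewrite mulrBl akx ee /ev rmorphB /= !rmorphXn /= horner_algX mulrBl.
- by rewrite mulrBl akx ep0 mulr0 subr0 ev_Xn.
- case: (ltnP n j) => h.
    rewrite -opprB size_polyN size_polyDl ?size_polyN ?size_polyXn //.
    by case: j h {nj}.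
  have h' : (j < n)%N by rewrite ltn_neqAle eq_sym nj h.
  rewrite size_polyDl ?size_polyN ?size_polyXn //.
  by rewrite size_polyXn ltnS.
Qed.

Lemma nTe_neq0 z : ~ Te z -> z != 0.
Proof. by move=> nt; apply/eqP => z0; apply: nt; rewrite z0; exact: Te0. Qed.

Lemma main12 : (exists n, (0 < n)%N /\ @qnil R A (a - a ^+ (n + 2) * x)) ->
  (exists n, (0 < n)%N /\ @qnil R A (a ^+ n - a * x)).
Proof.
move=> [n [hn /(c1 hn) [V1 Vp ex1]]]; exists n; split => //; apply/(c2 hn); split => //.
- move=> z nt; have := V1 z nt; rewrite !hornerE => h.
  have : z * (1 - z ^+ n) = 0 by rewrite mulrBr mulr1 -exprS.
  move/eqP; rewrite mulf_eq0 (negbTE (nTe_neq0 nt)) /= subr_eq0 => /eqP <-.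
  by rewrite subrr.
- move=> z nt; have := Vp z nt; rewrite !hornerE => ->.
  by rewrite -(prednK hn) exprS mul0r.
Qed.

Lemma main21 : (exists n, (0 < n)%N /\ @qnil R A (a ^+ n - a * x)) ->
  (exists n, (0 < n)%N /\ @qnil R A (a - a ^+ (n + 2) * x)).
Proof.
move=> [n [hn /(c2 hn) [V1 Vp ex1]]]; exists n; split => //; apply/(c1 hn); split => //.
- move=> z nt; have := V1 z nt; rewrite !hornerE => /eqP; rewrite subr_eq0 => /eqP h.
  by rewrite exprS h mulr1 subrr.
- move=> z nt; have := Vp z nt; rewrite !hornerE => /eqP; rewrite expf_eq0 => /andP [_ /eqP ->].
  by [].
Qed.

Lemma main32 : (exists m n : nat, [/\ (0 < m)%N, (0 < n)%N, (m%:Z - n%:Z != 1)%R &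
                             @qnil R A (a ^+ n - a ^+ m * x)]) ->
  (exists n, (0 < n)%N /\ @qnil R A (a ^+ n - a * x)).
Proof.
move=> [[|j] [n [// _ hn hmn]]].
have nj : n != j.
  apply: contra hmn => /eqP ->; rewrite -addn1 PoszD addrAC subrr add0r //.
move=> /(c3 hn nj) [V1 Vp ex1].
pose d := if (j < n)%N then (n - j)%N else (j - n)%N.
have hd : (0 < d)%N.
  rewrite /d; case: ifP => h; first by rewrite subn_gt0.
  by rewrite subn_gt0 ltn_neqAle nj leqNgt h.
have key (z : (R[i])%C) : z != 0 -> z ^+ n = z ^+ j -> z ^+ d = 1.
  move=> z0 hz; rewrite /d; case: ifP => h.
    have e1 : n = (j + (n - j))%N by rewrite subnKC // ltnW.
    have : z ^+ j * z ^+ (n - j) = z ^+ j * 1 by rewrite -exprD -e1 mulr1.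
    exact: (mulfI (expf_neq0 _ z0)).
  have e1 : j = (n + (j - n))%N by rewrite subnKC // leqNgt h.
  have : z ^+ n * z ^+ (j - n) = z ^+ n * 1 by rewrite -exprD -e1 mulr1.
  exact: (mulfI (expf_neq0 _ z0)).
exists d; split => //; apply/(c2 hd); split => //.
- move=> z nt; have := V1 z nt; rewrite !hornerE => /eqP; rewrite subr_eq0 => /eqP h.
  by rewrite (key z (nTe_neq0 nt) h) subrr.
- move=> z nt; have := Vp z nt; rewrite !hornerE => /eqP; rewrite expf_eq0 => /andP [_ /eqP ->].
  by rewrite -(prednK hd) exprS mul0r.
Qed.

End Main.

Theorem theorem2p4 (R : realType) (A : algType (R[i])%C) (N : A -> R)
    (HN : banach_algebra_norm N) (a x : A) :
  ((gpiHirano_invertible a /\ gpiHirano_inverse a x) <->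
   [/\ x * a * x = x, x * a = a * x &
       exists n : nat, (0 < n)%N /\ qnil (a ^+ n - a * x)]) /\
  ([/\ x * a * x = x, x * a = a * x &
       exists n : nat, (0 < n)%N /\ qnil (a ^+ n - a * x)] <->
   [/\ x * a * x = x, x * a = a * x &
       exists m n : nat, [/\ (0 < m)%N, (0 < n)%N, (m%:Z - n%:Z != 1)%R &
                             qnil (a ^+ n - a ^+ m * x)]]).
Proof.
split; split.
- move=> [_ [hxax hax hex]]; split; [done | by rewrite hax | exact: main12 hxax hax hex].
- move=> [hxax hxa hex]; have hax := esym hxa.
  have hi : gpiHirano_inverse a x := And3 hxax hax (main21 hxax hax hex).
  by split => //; exists x.
- move=> [hxax hxa [n [hn hq]]]; split => //; exists 1%N, n; split => //.
    by apply/negP => /eqP; lia.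
- move=> [hxax hxa h3]; split => //.
  exact: main32 hxax (esym hxa) h3.
Qed.
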